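(* For each $N\ge2$ let $(\nu_r^{(1:N)})_{r\ge1}$ be random vectors of non-negative integers with $\sum_i\nu_r^{(i)}=N$, and assume that for all real $0 \le s < u$, $$\lim_{N\to\infty}\mathbb{E}\Bigg[\sum_{r=\tau_N(s)+1}^{\tau_N(u)} c_N(r)^2\Bigg] = 0.$$ Fix $k\in\mathbb{N}$, times $0=t_0\le t_1\le\cdots\le t_k\le t$, and strictly positive constants $K_1,\dots,K_k$. Define $$E_N := \bigcap_{j=1}^k\Bigg\{\sum_{s=\tau_N(t_{j-1})+1}^{\tau_N(t_j)} c_N(s)^2 \le K_j\Bigg\}.$$ Then $\lim_{N\to\infty}\mathbb{P}[E_N]=1$.
   Context: $(x)_k$ is the falling factorial; $c_N(r) := \frac{1}{(N)_2}\sum_i(\nu_r^{(i)})_2$; $\tau_N(u) := \inf\{s\in\{0,1,2,\dots\}: \sum_{r=1}^s c_N(r)\ge u\}$ (so $\tau_N(0)=0$); sums with upper limit below lower limit are $0$. *)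

(* Defs.v *)
From HB Require Import structures.
From mathcomp Require Import all_boot all_order all_algebra.
From mathcomp Require Import all_classical all_reals all_analysis.
Set Implicit Arguments. Unset Strict Implicit. Unset Printing Implicit Defensive.
Import Order.TTheory GRing.Theory Num.Theory.
Local Open Scope ring_scope.

Definition cN {R : realType} (N : nat) (nu : 'I_N -> nat) : R :=
  (\sum_(i < N) ((nu i) ^_ 2)%:R) / ((N ^_ 2)%:R).

Definition psum {R : realType} (c : nat -> R) (s : nat) : R :=
  \sum_(1 <= r < s.+1) c r.

(* tau(u) = inf { s in N : psum c s >= u }, None encodes +infinity (inf of empty set) *)
Definition tau {R : realType} (c : nat -> R) (u : R) : option nat :=
  match pselect (exists s, u <= psum c s) with
  | left h => Some (@ex_minn (fun s => u <= psum c s) h)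
  | right _ => None
  end.

Definition in_range (a b : option nat) (r : nat) : bool :=
  (if a is Some ta then (ta < r)%N else false) && (if b is Some tb then (r <= tb)%N else true).

Definition sqsum {R : realType} (c : nat -> R) (a b : R) : \bar R :=
  (\sum_(1 <= r <oo | in_range (tau c a) (tau c b) r) ((c r) ^+ 2)%:E)%E.

(* Main.v *)
Require Import Defs.
From HB Require Import structures.
From mathcomp Require Import all_boot all_order all_algebra.
From mathcomp Require Import all_classical all_reals all_analysis.
From mathcomp Require Import measurable_realfun.
Import Order.TTheory GRing.Theory Num.Theory.
Local Open Scope classical_set_scope.
Local Open Scope ring_scope.

Lemma count_meas d (T : measurableType d) d' (Y : measurableType d')
  (C : countType) (h : T -> C) (g : C -> Y) :
  (forall x, measurable [set w | h w = x]) -> measurable_fun setT (fun w => g (h w)).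
Proof.
move=> hm _ A mA.
rewrite setTI.
have -> : (fun w => g (h w)) @^-1` A =
  \bigcup_n [set w | exists x, unpickle n = Some x /\ A (g x) /\ h w = x].
  apply/seteqP; split => w /=.
    move=> Aw; exists (pickle (h w)) => //; exists (h w); by rewrite pickleK.
  by move=> [n _ [x [_ [Ax Hx]]]]; rewrite Hx.
apply: bigcup_measurable => n _.
case E: (unpickle n) => [x|]; last first.
  rewrite (_ : [set _ | _] = set0) //; apply/seteqP; split => w //=.
  by move=> [x [+ _]].
case: (pselect (A (g x))) => Ax.
  rewrite (_ : [set _ | _] = [set w | h w = x]) //; apply/seteqP; split => w /=.
    by move=> [y [[->] [_ ->]]].
  by move=> hw; exists x; split => //; split => //.
rewrite (_ : [set _ | _] = set0) //; apply/seteqP; split => w //=.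
by move=> [y [[<-] [Ay _]]]; exact: Ax.
Qed.

Lemma nat_fiber d (T : measurableType d) (R : realType) (h : T -> nat) :
  measurable_fun setT (fun w => (h w)%:R : R) -> forall n, measurable [set w | h w = n].
Proof.
move=> mh n.
have := mh measurableT [set (n%:R : R)] (measurable_set1 _).
rewrite setTI; congr measurable; apply/seteqP; split => w /=.
  by move/eqP; rewrite eqr_nat => /eqP.
by move=> ->.
Qed.
Lemma sum1_meas d (T : measurableType d) (R : realType) (h : nat -> T -> \bar R) :
  (forall k x, (0 <= h k x)%E) -> (forall k, measurable_fun setT (h k)) ->
  measurable_fun setT (fun x => (\sum_(1 <= i <oo) h i x)%E).
Proof.
move=> h0 hm.
have := @ge0_emeasurable_sum _ _ _ setT h (fun i => (1 <= i)%N) (fun k x _ _ => h0 k x) (fun k _ => hm k).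
congr measurable_fun; apply/funext => x.
rewrite [RHS]eseries_cond; apply: eq_eseriesl => i /=.
by [].
Qed.

Lemma tau_someP (R : realType) (c : nat -> R) a m :
  tau c a = Some m <-> (a <= psum c m /\ forall s, (s < m)%N -> psum c s < a).
Proof.
rewrite /tau; case: pselect => [h|h].
  case: ex_minnP => n hn hmin; split.
    move=> [<-]; split => // s sn; rewrite ltNge; apply/negP => hs.
    by have := hmin _ hs; rewrite leqNgt sn.
  move=> [am hm]; congr Some; apply/eqP; rewrite eqn_leq hmin ?andbT //.
  rewrite leqNgt; apply/negP => /hm; rewrite ltNge hn //.
split => // -[am _]; exfalso; apply: h; by exists m.
Qed.

Lemma tau_noneP (R : realType) (c : nat -> R) a :
  tau c a = None <-> (forall s, psum c s < a).
Proof.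
rewrite /tau; case: pselect => [h|h]; split => //.
  by move=> H; case: h => s hs; have := H s; rewrite ltNge hs.
by move=> _ s; rewrite ltNge; apply/negP => hs; apply: h; exists s.
Qed.

Section Meas.
Variables (d : measure_display) (T : measurableType d) (R : realType) (N : nat)
  (nu : nat -> 'I_N -> T -> nat)
  (hnu : forall r i, measurable_fun setT (fun w => (nu r i w)%:R : R)).

Let c (w : T) : nat -> R := fun r => cN (fun i => nu r i w).

Lemma c_meas r : measurable_fun setT (fun w => c w r).
Proof.
rewrite /c /cN.
rewrite (_ : (fun w => _) = (fun w => \sum_(i < N) ((nu r i w)^_2)%:R) \* cst ((N ^_ 2)%:R^-1 : R)); last by [].
apply: measurable_funM => //.
apply: measurable_sum => i.
apply: (@count_meas _ _ _ _ _ (fun w => nu r i w) (fun n => (n ^_ 2)%:R : R)).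
move=> n; exact: (@nat_fiber _ _ _ _ (hnu r i) n).
Qed.

Lemma psum_meas s : measurable_fun setT (fun w => psum (c w) s).
Proof. rewrite /psum; apply: measurable_sum => r; exact: c_meas. Qed.

Lemma le_psum_meas a s : measurable [set w | a <= psum (c w) s].
Proof.
have := measurable_fun_le measurableT (measurable_cst a) (psum_meas s).
by rewrite setTI.
Qed.

Lemma lt_psum_meas a s : measurable [set w | psum (c w) s < a].
Proof.
rewrite (_ : [set _ | _] = ~` [set w | a <= psum (c w) s]).
  exact/measurableC/le_psum_meas.
by apply/seteqP; split => w /=; rewrite ltNge => /negP.
Qed.

Lemma tau_fiber a (o : option nat) : measurable [set w | tau (c w) a = o].
Proof.
case: o => [m|].
  rewrite (_ : [set _ | _] = [set w | a <= psum (c w) m] `&`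
     \bigcap_(s in [set s | (s < m)%N]) [set w | psum (c w) s < a]).
    apply: measurableI; first exact: le_psum_meas.
    by apply: bigcap_measurableType => s _; exact: lt_psum_meas.
  apply/seteqP; split => w /=.
    by move/tau_someP => [h1 h2]; split => // s /= /h2.
  by move=> [h1 h2]; apply/tau_someP; split => // s sm; exact: h2.
rewrite (_ : [set _ | _] = \bigcap_(s in setT) [set w | psum (c w) s < a]).
  by apply: bigcap_measurableType => s _; exact: lt_psum_meas.
apply/seteqP; split => w /=.
  by move/tau_noneP => h s _; exact: h.
by move=> h; apply/tau_noneP => s; exact: h.
Qed.

Lemma sqsum_meas a b : measurable_fun [set: T] ((fun w => sqsum (c w) a b) : T -> \bar R).
Proof.
rewrite /sqsum.
under eq_fun do rewrite eseries_mkcond.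
apply: sum1_meas.
  by move=> k x; case: ifP => // _; rewrite lee_fin sqr_ge0.
move=> r.
apply: measurable_fun_ifT.
- apply: (@count_meas _ _ _ _ _ (fun w => (tau (c w) a, tau (c w) b))
      (fun p => in_range p.1 p.2 r)).
  move=> [x y].
  rewrite (_ : [set _ | _] = [set w | tau (c w) a = x] `&` [set w | tau (c w) b = y]).
    by apply: measurableI; exact: tau_fiber.
  by apply/seteqP; split => w /=; [case=> -> -> | case=> -> ->].
- apply/measurable_EFinP; apply: measurable_funX; exact: c_meas.
- exact: measurable_cst.
Qed.

End Meas.

Lemma sqsum_same (R : realType) (c : nat -> R) a : sqsum c a a = 0%E.
Proof.
rewrite /sqsum; apply: eseries0 => r _.
rewrite /in_range; case: (tau c a) => [m|] //.
by case: leqP.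
Qed.

Lemma sqsum_ge0 (R : realType) (c : nat -> R) a b : (0 <= sqsum c a b)%E.
Proof. by apply: nneseries_ge0 => n _ _; rewrite lee_fin sqr_ge0. Qed.

Theorem lemma15 (R : realType) (d : measure_display)
  (T : nat -> measurableType d) (P : forall N, probability (T N) R)
  (nu : forall N : nat, nat -> 'I_N -> T N -> nat)
  (nu_meas : forall N r (i : 'I_N), (2 <= N)%N ->
      measurable_fun setT (fun w => ((nu N r i w)%:R : R)))
  (nu_sum : forall N r w, (2 <= N)%N -> (1 <= r)%N ->
      (\sum_(i < N) nu N r i w)%N = N)
  (Hlim : forall s u : R, 0 <= s -> s < u ->
      ((fun N => (\int[P N]_w sqsum (fun r => cN (fun i => nu N r i w)) s u)%E)
         @ \oo --> 0%E))
  (k : nat) (t : nat -> R) (tt : R)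
  (t0 : t 0%N = 0)
  (t_mono : forall j, (j < k)%N -> t j <= t j.+1)
  (t_le : t k <= tt)
  (K : nat -> R) (K_pos : forall j, (1 <= j <= k)%N -> 0 < K j) :
  (fun N => P N [set w | forall j, (1 <= j <= k)%N ->
      (sqsum (fun r => cN (fun i => nu N r i w)) (t j.-1) (t j) <= (K j)%:E)%E])
    @ \oo --> 1%E.
Proof.
pose X N j w := sqsum (fun r => cN (fun i => nu N r i w)) (t j.-1) (t j).
have Xmeas N j : (2 <= N)%N -> measurable_fun setT (X N j).
  move=> hN.
  exact: (@sqsum_meas _ _ _ N (nu N) (fun r i => nu_meas N r i hN) (t j.-1) (t j)).
have tnn j : (j <= k)%N -> 0 <= t j.
  elim: j => [|j IH] hj; first by rewrite t0.
  apply: le_trans (t_mono j hj); apply: IH; exact: ltnW.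
pose bad N j := [set w | ((K j)%:E < X N j w)%E].
have badm N j : (2 <= N)%N -> measurable (bad N j).
  move=> hN.
  rewrite (_ : bad N j = ~` (setT `&` [set w | (X N j w <= (K j)%:E)%E])).
    apply: measurableC; apply: measurable_lee => //; first exact: Xmeas.
  apply/seteqP; split => w; rewrite /bad /setC /setI /=.
    by move=> h [_ h']; rewrite ltNge h' in h.
  by move=> h; rewrite ltNge; apply/negP => h'; apply: h.
have badcvg j : (1 <= j <= k)%N -> (fun N => P N (bad N j)) @ \oo --> 0%E.
  move=> /andP[j1 jk]; case: j j1 jk => [//|j] _ jk.
  have Kp : 0 < K j.+1 by apply: K_pos; rewrite jk.
  have : t j.+1.-1 <= t j.+1 by exact: t_mono.
  rewrite le_eqVlt => /orP[/eqP teq|tlt].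
    rewrite (_ : (fun N => _) = fun=> 0%E); first exact: cvg_cst.
    apply/funext => N; rewrite -(measure0 (P N)); congr (P N _).
    apply/seteqP; split => w //=; rewrite /bad /X /= teq sqsum_same lte_fin.
    by rewrite ltNge (ltW Kp).
  have hI := Hlim _ _ (tnn _ (ltnW jk)) tlt.
  apply: (@squeeze_cvge _ _ _ _ (fun=> 0%E) _
     (fun N => ((K j.+1)^-1)%:E * \int[P N]_w X N j.+1 w)%E).
  - near=> N; apply/andP; split; first exact: measure_ge0.
    have hN : (2 <= N)%N by near: N; exact: nbhs_infty_ge.
    rewrite lee_pdivlMl //.
    have := @le_integral_comp_abse _ _ _ (P N) setT measurableT (X N j.+1) (K j.+1) id
      (@measurable_id _ _ setT) (fun r h => h) (fun x y _ _ h => h) (Xmeas N j.+1 hN) Kp.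
    move=> H; apply: (le_trans _ (le_trans H _)).
    + apply: lee_wpmul2l; first by rewrite lee_fin ltW.
      apply: le_measure; rewrite ?inE //.
      * exact: badm.
      * apply: emeasurable_fun_c_infty => //.
        exact: measurableT_comp (Xmeas N j.+1 hN).
      * by move=> w /= /ltW hw; split => //; rewrite gee0_abs // sqsum_ge0.
    + rewrite le_eqVlt; apply/orP; left; apply/eqP; apply: eq_integral => w _.
      by rewrite gee0_abs // sqsum_ge0.
  - exact: cvg_cst.
  - rewrite -(mule0 ((K j.+1)^-1)%:E); apply: cvgeZl => //.
pose G N m := [set w | exists j, (1 <= j <= m)%N /\ ((K j)%:E < X N j w)%E].
have GS N m : G N m.+1 = G N m `|` bad N m.+1.
  apply/seteqP; split => w /=.
    move=> [j [/andP[j1 jm] h]]; move: jm; rewrite leq_eqVlt => /orP[/eqP e|jm].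
      by right; rewrite /bad /= -e.
    by left; exists j; rewrite j1 -ltnS jm.
  move=> [[j [/andP[j1 jm] h]]|h].
    by exists j; rewrite j1 leqW.
  by exists m.+1; split; rewrite ?leqnn.
have G0 N : G N 0 = set0.
  by apply/seteqP; split => w //= [[|j] [/andP[j1 j0] _]].
have Gm N m : (2 <= N)%N -> measurable (G N m).
  move=> hN; elim: m => [|m IH]; first by rewrite G0.
  by rewrite GS; apply: measurableU => //; exact: badm.
have Gcvg m : (m <= k)%N -> (fun N => P N (G N m)) @ \oo --> 0%E.
  elim: m => [|m IH] hm.
    rewrite (_ : (fun N => _) = fun=> 0%E); first exact: cvg_cst.
    by apply/funext => N; rewrite G0 measure0.
  apply: (@squeeze_cvge _ _ _ _ (fun=> 0%E) _ (fun N => P N (G N m) + P N (bad N m.+1))%E).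
  - near=> N; have hN : (2 <= N)%N by near: N; exact: nbhs_infty_ge.
    rewrite measure_ge0 /= GS; apply: measureU2; [exact: Gm | exact: badm].
  - exact: cvg_cst.
  - rewrite -(adde0 0%E); apply: cvgeD => //; first exact: IH (ltnW hm).
    by apply: badcvg; rewrite hm.
have FE N : [set w | forall j, (1 <= j <= k)%N ->
      (sqsum (fun r => cN (fun i => nu N r i w)) (t j.-1) (t j) <= (K j)%:E)%E]
    = ~` G N k.
  apply/seteqP; split => w /=.
    by move=> h [j [hj hlt]]; have := h j hj; rewrite leNgt hlt.
  by move=> h j hj; rewrite leNgt; apply/negP => hlt; apply: h; exists j.
apply: (@squeeze_cvge _ _ _ _ (fun N => 1 - P N (G N k))%E _ (fun N => 1 - P N (G N k))%E).
- near=> N; have hN : (2 <= N)%N by near: N; exact: nbhs_infty_ge.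
  by rewrite FE probability_setC ?lexx //; exact: Gm.
- rewrite -[X in _ --> X](sube0 1%E); apply: cvgeB => //; [exact: cvg_cst | exact: Gcvg].
- rewrite -[X in _ --> X](sube0 1%E); apply: cvgeB => //; [exact: cvg_cst | exact: Gcvg].
Unshelve. all: end_near.
Qed.
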